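(* Let $(\xi_j)_{j=1}^\infty$ be an i.i.d. sequence of strictly positive random variables, let $\xi$ have the common distribution, and let \[ Y = 1 + \xi_1 + \xi_1\xi_2 + \xi_1\xi_2\xi_3 + \cdots = \sum_{k=0}^{\infty} \prod_{j=1}^{k} \xi_j \] (empty product equal to $1$). For real $q$ write $\mu_q = \mathbb{E}(\xi^q)$. Then for every real $p \ge 1$: $\mathbb{E}(Y^p) < \infty$ if and only if $\mu_p < 1$. Moreover, if $\mu_p<1$, then $\mu_q < 1$ for every real $1 \le q \le p$ and \[ \mathbb{E}(Y^p) \le \bigl(1 - \mu_p^{1/p}\bigr)^{-p}; \] and if in addition $p \ge 1$ is an integer, then \[ \mathbb{E}(Y^p) = \frac{1}{1-\mu_p} \sum_{k=0}^{p-1} \binom{p}{k} \mu_k \, \mathbb{E}(Y^k). \] *)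

(* Defs.v *)
From HB Require Import structures.
From mathcomp Require Import all_boot all_order all_algebra.
From mathcomp Require Import all_classical all_reals all_analysis.
Set Implicit Arguments. Unset Strict Implicit. Unset Printing Implicit Defensive.
Import Order.TTheory GRing.Theory Num.Theory.
Local Open Scope classical_set_scope.
Local Open Scope ring_scope.

(* (xi_j)_j (indexed from 0: xi 0 plays the role of xi_1) is an i.i.d.
   sequence of real random variables on the probability space P. *)
Definition iid_seq {d} {T : measurableType d} {R : realType}
    (P : probability T R) (xi : nat -> T -> R) : Prop :=
  (forall j, measurable_fun setT (xi j)) /\
  (forall j (B : set R), measurable B ->
     P (xi j @^-1` B) = P (xi 0%N @^-1` B)) /\
  (forall (J : seq nat) (B : nat -> set R), uniq J ->
     (forall j, measurable (B j)) ->
     P (\bigcap_(j in [set j | j \in J]) (xi j @^-1` B j)) =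
     (\prod_(j <- J) P (xi j @^-1` B j))%E).

Definition mom {d} {T : measurableType d} {R : realType}
    (P : probability T R) (xi : nat -> T -> R) (q : R) : \bar R :=
  (\int[P]_x ((xi 0%N x) `^ q)%:E)%E.

Definition Yperp {R : realType} {T : Type} (xi : nat -> T -> R) (x : T) : \bar R :=
  (\sum_(0 <= k <oo) (\prod_(j < k) xi j x)%:E)%E.

Definition EYp {d} {T : measurableType d} {R : realType}
    (P : probability T R) (xi : nat -> T -> R) (p : R) : \bar R :=
  (\int[P]_x (Yperp xi x `^ p))%E.

(* Main.v *)
Require Import Defs.
From HB Require Import structures.
From mathcomp Require Import all_boot all_order all_algebra.
From mathcomp Require Import all_classical all_reals all_analysis.
From mathcomp Require Import measurable_realfun.
From mathcomp Require Import ring lra.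
Import Order.TTheory GRing.Theory Num.Theory.
Set Implicit Arguments. Unset Strict Implicit. Unset Printing Implicit Defensive.
Local Open Scope classical_set_scope.
Local Open Scope ring_scope.
Section indep.
Context (R : realType) (d : measure_display) (T : measurableType d)
  (P : probability T R) (xi : nat -> T -> R) (hiid : iid_seq P xi).
Local Open Scope ereal_scope.

Lemma mxi j : measurable_fun setT (xi j).
Proof. exact: hiid.1. Qed.

Lemma mpre j (B : set R) : measurable B -> measurable (xi j @^-1` B).
Proof. by move=> mB; rewrite -[X in measurable X]setTI; exact: mxi. Qed.

Lemma indic_prod (J : seq nat) (B : nat -> set R) x :
  (\prod_(j <- J) \1_(B j) (xi j x) : R)%R =
  \1_(\bigcap_(j in [set j | j \in J]) (xi j @^-1` B j)) x.
Proof.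
rewrite [RHS]indicE; case: (boolP (x \in _)) => [/set_mem Hx|Hx].
- rewrite big_seq big1 // => j jJ; rewrite indicE mem_set //; exact: Hx.
- apply/eqP; rewrite prodf_seq_eq0; apply/negPn/negP => /hasPn H.
  apply: (negP Hx); apply/mem_set => j /= jJ.
  have := H j jJ; rewrite /= indicE; case: (boolP (xi j x \in B j)) => [/set_mem//|_].
  by rewrite eqxx.
Qed.

Lemma int_indic_xi j (A : set R) : measurable A ->
  \int[P]_x (\1_A (xi j x))%:E = P (xi j @^-1` A).
Proof.
move=> mA.
have -> : (fun x => (\1_A (xi j x) : R)%:E) = (fun x => (\1_(xi j @^-1` A) x : R)%:E).
  by apply: boolp.funext => x; rewrite !indicE.
by rewrite integral_indic ?setIT //; exact: mpre.
Qed.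

Lemma base (J : seq nat) (B : nat -> set R) : uniq J -> (forall j, measurable (B j)) ->
  \int[P]_x (\prod_(j <- J) \1_(B j) (xi j x))%:E =
  \prod_(j <- J) \int[P]_x (\1_(B j) (xi 0 x))%:E.
Proof.
move=> uJ mB.
under eq_integral => x _ do rewrite indic_prod.
rewrite integral_indic //; last first.
  apply: bigcap_measurableType => k _; exact: mpre.
rewrite setIT.
transitivity (\prod_(j <- J) P (xi j @^-1` B j)); first exact: (hiid.2.2 J B uJ mB).
apply: eq_bigr => j _.
by rewrite int_indic_xi // hiid.2.1.
Qed.

End indep.
Section step.
Context (R : realType) (d : measure_display) (T : measurableType d)
  (P : probability T R) (xi : nat -> T -> R) (hiid : iid_seq P xi).
Local Open Scope ereal_scope.

Definition good (f : nat -> R -> R) :=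
  [/\ forall j, measurable_fun setT (f j), forall j y, (0 <= f j y)%R &
      forall j, \int[P]_x (f j (xi 0 x))%:E < +oo].

Definition PropJ (J : seq nat) (f : nat -> R -> R) :=
  \int[P]_x (\prod_(j <- J) f j (xi j x))%:E =
  \prod_(j <- J) \int[P]_x (f j (xi 0 x))%:E.

Definition upd (f : nat -> R -> R) (a : nat) (g : R -> R) :=
  fun j => if j == a then g else f j.

Lemma indic_ge0 (A : set R) y : (0 <= \1_A y :> R)%R.
Proof. by rewrite indicE ler0n. Qed.

Variables (J : seq nat) (f : nat -> R -> R) (a : nat).
Hypotheses (uJ : uniq J) (aJ : a \in J) (gf : good f).

Let G x := (\prod_(j <- J | j != a) f j (xi j x))%R.
Let K := \prod_(j <- J | j != a) \int[P]_x (f j (xi 0 x))%:E.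
Let C (g : R -> R) :=
  \int[P]_x (g (xi a x) * G x)%:E = \int[P]_x (g (xi 0 x))%:E * K.

Let f0 j y : (0 <= f j y)%R. Proof. by case: gf => _ + _. Qed.
Let mf j : measurable_fun setT (f j). Proof. by case: gf. Qed.

Let G0 x : (0 <= G x)%R.
Proof. by apply: prodr_ge0 => j _. Qed.
Let mG : measurable_fun setT G.
Proof.
rewrite /G; under eq_fun do rewrite -big_filter.
apply: measurable_prod => j _; apply: measurableT_comp => //; exact: (hiid.1 _).
Qed.

Let intf_ge0 j : 0 <= \int[P]_x (f j (xi 0 x))%:E.
Proof. by apply: integral_ge0 => x _; rewrite lee_fin. Qed.

Let K0 : 0 <= K. Proof. by apply: prode_ge0 => j _. Qed.
Let Kfin : K \is a fin_num.
Proof.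
rewrite /K; apply: (big_ind (fun x => x \is a fin_num)) => //; first exact: fin_numM.
by move=> j _; rewrite ge0_fin_numE //; case: gf.
Qed.

Let mgG (g : R -> R) : measurable_fun setT g ->
  measurable_fun setT (fun x => (g (xi a x) * G x)%:E).
Proof.
move=> mg; apply/measurable_EFinP; apply: measurable_funM => //.
apply: measurableT_comp => //; exact: (hiid.1 _).
Qed.

Let mg0 (g : R -> R) : measurable_fun setT g ->
  measurable_fun setT (fun x => (g (xi 0 x))%:E).
Proof.
move=> mg; apply/measurable_EFinP; apply: measurableT_comp => //; exact: (hiid.1 _).
Qed.

Let decomp (g : R -> R) : PropJ J (upd f a g) <-> C g.
Proof.
rewrite /PropJ /C.
have eL x : (\prod_(j <- J) upd f a g j (xi j x) = g (xi a x) * G x)%R.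
  rewrite (bigD1_seq a) //= /upd eqxx; congr (_ * _)%R.
  by apply: eq_bigr => j /negbTE ->.
have eR : \prod_(j <- J) \int[P]_x (upd f a g j (xi 0 x))%:E =
    \int[P]_x (g (xi 0 x))%:E * K.
  rewrite (bigD1_seq a) //= /upd eqxx; congr (_ * _).
  by apply: eq_bigr => j /negbTE ->.
rewrite eR; under eq_integral => x _ do rewrite eL.
by split.
Qed.

Let C_sum (A : R -> set R) : (forall r, measurable (A r)) ->
  (forall B, measurable B -> C \1_B) -> forall (s : seq R),
  (forall r, r \in s -> 0 <= r)%R ->
  C (fun y => \sum_(r <- s) r * \1_(A r) y)%R.
Proof.
move=> mA HC; elim => [|r s IH] s0.
  rewrite /C; under eq_integral => x _ do rewrite big_nil mul0r.
  under [X in _ = X * _]eq_integral => x _ do rewrite big_nil.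
  by rewrite integral0 mul0e.
have r0 : (0 <= r)%R by apply: s0; rewrite mem_head.
have s0' : forall t, t \in s -> (0 <= t)%R.
  by move=> t ts; apply: s0; rewrite in_cons ts orbT.
have {IH} := IH s0'; rewrite /C => IH.
have g0 y : (0 <= \sum_(t <- s) t * \1_(A t) y)%R.
  rewrite big_seq; apply: sumr_ge0 => t ts; apply: mulr_ge0; [exact: s0'|exact: indic_ge0].
have mg : measurable_fun setT (fun y => \sum_(t <- s) t * \1_(A t) y)%R.
  apply: measurable_sum => t; apply: measurable_funM => //; exact: measurable_indic.
have mi : measurable_fun setT (\1_(A r) : R -> R) by exact: measurable_indic.
have mi' := measurable_funeM r%:E (mgG mi).
have mi0 := measurable_funeM r%:E (mg0 mi).
have i0 : 0 <= \int[P]_x (\1_(A r) (xi 0 x))%:E.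
  by apply: integral_ge0 => x _; rewrite lee_fin indic_ge0.
have g0' : 0 <= \int[P]_x (\sum_(t <- s) t * \1_(A t) (xi 0 x))%:E.
  by apply: integral_ge0 => x _; rewrite lee_fin.
have E1 : \int[P]_x ((\sum_(t <- r :: s) t * \1_(A t) (xi a x)) * G x)%:E =
  \int[P]_x (r%:E * (\1_(A r) (xi a x) * G x)%:E) +
  \int[P]_x ((\sum_(t <- s) t * \1_(A t) (xi a x)) * G x)%:E.
  rewrite -ge0_integralD //.
  - apply: eq_integral => x _; rewrite big_cons mulrDl EFinD -mulrA.
    by rewrite [in X in X + _ = _]EFinM.
  - by move=> x _; apply: mule_ge0; rewrite lee_fin // mulr_ge0 // indic_ge0.
  - by move=> x _; rewrite lee_fin mulr_ge0.
  - exact: (mgG mg).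
have E2 : \int[P]_x (r%:E * (\1_(A r) (xi a x) * G x)%:E) =
   r%:E * \int[P]_x ((\1_(A r) (xi a x) * G x)%:E).
  apply: ge0_integralZl_EFin => //.
  - by move=> x _; rewrite lee_fin mulr_ge0 // indic_ge0.
  - exact: (mgG mi).
have E3 : \int[P]_x (\sum_(t <- r :: s) t * \1_(A t) (xi 0 x))%:E =
  \int[P]_x (r%:E * (\1_(A r) (xi 0 x))%:E) +
  \int[P]_x (\sum_(t <- s) t * \1_(A t) (xi 0 x))%:E.
  rewrite -ge0_integralD //.
  - by apply: eq_integral => x _; rewrite big_cons EFinD EFinM.
  - by move=> x _; rewrite -EFinM lee_fin mulr_ge0 // indic_ge0.
  - by move=> x _; rewrite lee_fin.
  - exact: (mg0 mg).
have E4 : \int[P]_x (r%:E * (\1_(A r) (xi 0 x))%:E) =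
   r%:E * \int[P]_x ((\1_(A r) (xi 0 x))%:E).
  by apply: ge0_integralZl_EFin => //; exact: (mg0 mi).
rewrite /C /= E1 E2 E3 E4 IH (HC (A r) (mA r)).
rewrite [RHS]ge0_muleDl ?muleA //.
by apply: mule_ge0; rewrite ?lee_fin.
Qed.


Import HBNNSimple.

Let C_nnsfun (phi : {nnsfun R >-> R}) :
  (forall B, measurable B -> C \1_B) -> C phi.
Proof.
move=> HC.
have -> : (phi : R -> R) = (fun y =>
    \sum_(r <- finmap.enum_fset (fset_set (range phi))) r * \1_(phi @^-1` [set r]) y)%R.
  by apply: funext => y; rewrite [LHS]fimfunE fsbig_finite //; exact: fimfunP.
apply: C_sum => //.
- move=> r; rewrite in_fset_set; last exact: fimfunP.
  by rewrite inE => -[y _ <-]; exact: fun_ge0.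
Qed.

Let C_lim : (forall B, measurable B -> C \1_B) -> C (f a).
Proof.
move=> HC.
have mfa : measurable_fun setT (EFin \o f a) by apply/measurable_EFinP.
pose phi := nnsfun_approx measurableT mfa.
have phi_cvg y : (fun m => (phi m y)%:E) @ \oo --> (f a y)%:E.
  by apply: cvg_nnsfun_approx => // z _ /=; rewrite lee_fin.
have phi_nd y m n : (m <= n)%N -> (phi m y <= phi n y)%R.
  by move=> mn; have /lefP := nd_nnsfun_approx measurableT mfa mn; apply.
have phi0 m y : (0 <= phi m y)%R by exact: fun_ge0.
have mphi m : measurable_fun setT (phi m : R -> R) by exact: measurable_funPT.
have HL : (fun m => \int[P]_x (phi m (xi a x) * G x)%:E) @ \oo -->
           \int[P]_x (f a (xi a x) * G x)%:E.
  have := @cvg_monotone_convergence _ _ _ P setT measurableT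
    (fun m x => (phi m (xi a x) * G x)%:E) (fun m => mgG (mphi m)).
  have -> : (fun x => limn ((fun m x => (phi m (xi a x) * G x)%:E)^~ x)) =
            (fun x => (f a (xi a x) * G x)%:E).
    apply: funext => x; apply: cvg_lim => //.
    under eq_fun do rewrite EFinM.
    rewrite EFinM; apply: cvgeZr => //; exact: phi_cvg.
  apply.
  - by move=> m x _; rewrite lee_fin mulr_ge0.
  - by move=> x _ m n mn; rewrite lee_fin ler_wpM2r // phi_nd.
have HR : (fun m => \int[P]_x (phi m (xi 0 x))%:E * K) @ \oo -->
           \int[P]_x (f a (xi 0 x))%:E * K.
  apply: cvgeZr => //.
  have := @cvg_monotone_convergence _ _ _ P setT measurableT
    (fun m x => (phi m (xi 0 x))%:E) (fun m => mg0 (mphi m)).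
  have -> : (fun x => limn ((fun m x => (phi m (xi 0 x))%:E)^~ x)) =
            (fun x => (f a (xi 0 x))%:E).
    by apply: funext => x; apply: cvg_lim => //; exact: phi_cvg.
  apply.
  - by move=> m x _; rewrite lee_fin.
  - by move=> x _ m n mn; rewrite lee_fin phi_nd.
have E : (fun m => \int[P]_x (phi m (xi a x) * G x)%:E) =
          (fun m => \int[P]_x (phi m (xi 0 x))%:E * K).
  by apply: funext => m; exact: (C_nnsfun (phi m) HC).
rewrite E in HL.
exact: (cvg_unique _ HL HR).
Qed.

Lemma step : (forall B, measurable B -> PropJ J (upd f a \1_B)) -> PropJ J f.
Proof.
move=> H.
have -> : f = upd f a (f a).
  by apply: funext => j; rewrite /upd; case: eqP => // ->.
apply/decomp; apply: C_lim => B mB; apply/decomp; exact: H.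
Qed.

End step.
Section L1sec.
Context (R : realType) (d : measure_display) (T : measurableType d)
  (P : probability T R) (xi : nat -> T -> R) (hiid : iid_seq P xi).
Local Open Scope ereal_scope.

Lemma good_upd f a (A : set R) : good P xi f -> measurable A ->
  good P xi (upd f a \1_A).
Proof.
move=> [mf f0 fi] mA; split => j; rewrite /upd; case: eqP => _.
- exact: measurable_indic.
- exact: mf.
- move=> y; exact: indic_ge0.
- exact: f0.
- rewrite (int_indic_xi hiid) //.
  by apply: (le_lt_trans (probability_le1 _ (mpre hiid 0 mA))); rewrite ltry.
- exact: fi.
Qed.

Lemma L1 (J : seq nat) (f : nat -> R -> R) : uniq J -> good P xi f ->
  PropJ P xi J f.
Proof.
move=> uJ.
suff H : forall (L : seq nat) g, good P xi g ->
    (forall j, j \in J -> j \notin L -> exists B, measurable B /\ g j = \1_B) ->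
    PropJ P xi J g.
  by move=> gf; apply: (H J f gf) => j jJ; rewrite jJ.
elim => [|a L IH] g gg Hg.
- have hex : forall j, exists B : set R,
      measurable B /\ (j \in J -> g j = \1_B).
    move=> j; case: (boolP (j \in J)) => jJ.
      have := Hg j jJ; rewrite in_nil => /(_ isT) [B [mB ->]].
      by exists B.
    by exists setT; split => //; rewrite (negbTE jJ).
  have [B HB] := choice hex.
  rewrite /PropJ.
  transitivity (\int[P]_x (\prod_(j <- J) \1_(B j) (xi j x))%:E).
    apply: eq_integral => x _; congr EFin.
    by apply: eq_big_seq => j jJ; rewrite (HB j).2.
  rewrite (base hiid) //; last by move=> j; exact: (HB j).1.
  by apply: eq_big_seq => j jJ; rewrite (HB j).2.
- case: (boolP (a \in J)) => aJ.
    apply: (step hiid uJ aJ gg) => A mA; apply: IH; first exact: good_upd.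
    move=> j jJ jL; rewrite /upd; case: eqP => [_|/eqP ja]; first by exists A.
    by apply: Hg => //; rewrite in_cons negb_or ja jL.
  apply: IH => // j jJ jL; apply: Hg => //; rewrite in_cons negb_or jL andbT.
  by apply/eqP => ja; rewrite -ja jJ in aJ.
Qed.

End L1sec.
Definition Xp {R : realType} {T : Type} (xi : nat -> T -> R) (k : nat) (x : T) : R :=
  (\prod_(j < k) xi j x)%R.
Definition Sp {R : realType} {T : Type} (xi : nat -> T -> R) (N : nat) (x : T) : R :=
  (\sum_(k < N) Xp xi k x)%R.

Section Yfacts.
Context (R : realType) (d : measure_display) (T : measurableType d)
  (P : probability T R) (xi : nat -> T -> R) (hiid : iid_seq P xi)
  (hpos : forall j x, (0 < xi j x)%R).
Local Open Scope ereal_scope.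

Lemma Xp_gt0 k x : (0 < Xp xi k x)%R.
Proof. by apply: prodr_gt0 => j _. Qed.

Lemma Sp_ge0 N x : (0 <= Sp xi N x)%R.
Proof. by apply: sumr_ge0 => k _; exact: ltW (Xp_gt0 _ _). Qed.

Lemma Sp_S N x : Sp xi N.+1 x = (Sp xi N x + Xp xi N x)%R.
Proof. by rewrite /Sp big_ord_recr. Qed.

Lemma Sp_nd x m n : (m <= n)%N -> (Sp xi m x <= Sp xi n x)%R.
Proof.
elim: n => [|n IH]; first by rewrite leqn0 => /eqP ->.
rewrite leq_eqVlt => /predU1P[->//|]; rewrite ltnS => /IH mn.
by rewrite Sp_S (le_trans mn) // lerDl ltW // Xp_gt0.
Qed.

Lemma mXp k : measurable_fun setT (Xp xi k).
Proof. by apply: measurable_prod => j _; exact: (hiid.1 j). Qed.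

Lemma mSp N : measurable_fun setT (Sp xi N).
Proof. by apply: measurable_sum => k; exact: mXp. Qed.

Lemma YE x : Yperp xi x = ereal_sup (range (fun N => (Sp xi N x)%:E)).
Proof.
rewrite /Yperp.
have -> : (fun n => \sum_(0 <= k < n) (\prod_(j < k) xi j x)%:E) =
          (fun n => (Sp xi n x)%:E).
  by apply: funext => n; rewrite sumEFin big_mkord.
apply: cvg_lim => //; apply: ereal_nondecreasing_cvgn => m n mn.
by rewrite lee_fin; exact: Sp_nd.
Qed.

Lemma Y_ge x N : (Sp xi N x)%:E <= Yperp xi x.
Proof. by rewrite YE; apply: ereal_sup_ubound; exists N. Qed.

Lemma poweR_le (x y : \bar R) r : (0 <= r)%R -> 0 <= x -> x <= y ->
  x `^ r <= y `^ r.
Proof.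
move=> r0 x0 xy; apply: gt0_ler_poweR => //; rewrite in_itv /= leey andbT //.
exact: le_trans xy.
Qed.

Lemma cvg_EY r : (0 < r)%R ->
  (fun N => \int[P]_x ((Sp xi N x) `^ r)%:E) @ \oo --> EYp P xi r.
Proof.
move=> r0.
have mg N : measurable_fun setT (fun x => ((Sp xi N x) `^ r)%:E).
  apply/measurable_EFinP; exact: (measurableT_comp (measurable_powR r) (mSp N)).
have := @cvg_monotone_convergence _ _ _ P setT measurableT _ mg.
rewrite /EYp.
have -> : (fun x => limn ((fun N x => ((Sp xi N x) `^ r)%:E)^~ x)) =
          (fun x => Yperp xi x `^ r).
  apply: funext => x.
  have ndx : {homo (fun N => ((Sp xi N x) `^ r)%:E) : m n / (m <= n)%N >-> m <= n}.
    move=> m n mn; rewrite lee_fin ge0_ler_powR ?nnegrE ?Sp_ge0 ?(ltW r0) //.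
    exact: Sp_nd.
  rewrite (cvg_lim _ (ereal_nondecreasing_cvgn ndx)) //.
  set L := ereal_sup _.
  have L0 : 0 <= L.
    apply: le_trans (ereal_sup_ubound _); last by exists 0%N.
    by rewrite lee_fin powR_ge0.
  apply/eqP; rewrite eq_le; apply/andP; split.
    apply: ge_ereal_sup => _ [N _ <-]; rewrite -poweR_EFin.
    by apply: poweR_le; rewrite ?(ltW r0) ?lee_fin ?Sp_ge0 ?Y_ge.
  have HY : Yperp xi x <= L `^ r^-1.
    rewrite YE; apply: ge_ereal_sup => _ [N _ <-].
    rewrite -[X in X%:E <= _](@powRr1 _ (Sp xi N x)) ?Sp_ge0 //.
    rewrite -(mulfV (lt0r_neq0 r0)) powRrM -poweR_EFin.
    apply: poweR_le; rewrite ?invr_ge0 ?(ltW r0) ?lee_fin ?powR_ge0 //.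
    by apply: ereal_sup_ubound; exists N.
  rewrite -[leRHS](poweRe1 L0) -(mulVf (lt0r_neq0 r0)) poweRrM.
  apply: poweR_le; rewrite ?(ltW r0) //.
  by apply: le_trans (Y_ge x 0); rewrite lee_fin Sp_ge0.
apply.
- by move=> N x _; rewrite lee_fin powR_ge0.
- move=> x _ m n mn; rewrite lee_fin ge0_ler_powR ?nnegrE ?Sp_ge0 ?(ltW r0) //.
  exact: Sp_nd.
Qed.

Lemma EY_ge r N : (0 < r)%R -> \int[P]_x ((Sp xi N x) `^ r)%:E <= EYp P xi r.
Proof.
move=> r0.
have nd : {homo (fun N => \int[P]_x ((Sp xi N x) `^ r)%:E) : m n / (m <= n)%N >-> m <= n}.
  move=> m n mn; apply: ge0_le_integral => //.
  - by move=> x _; rewrite lee_fin powR_ge0.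
  - apply/measurable_EFinP; exact: (measurableT_comp (measurable_powR r) (mSp _)).
  - apply/measurable_EFinP; exact: (measurableT_comp (measurable_powR r) (mSp _)).
  - move=> x _; rewrite lee_fin ge0_ler_powR ?nnegrE ?Sp_ge0 ?(ltW r0) //.
    exact: Sp_nd.
have E := cvg_unique (@ereal_hausdorff R) (cvg_EY r0) (ereal_nondecreasing_cvgn nd).
by rewrite E; apply: ereal_sup_ubound; exists N.
Qed.

End Yfacts.
Section moments.
Context (R : realType) (d : measure_display) (T : measurableType d)
  (P : probability T R) (xi : nat -> T -> R) (hiid : iid_seq P xi)
  (hpos : forall j x, (0 < xi j x)%R).
Local Open Scope ereal_scope.

Lemma mom_ge0 q : 0 <= mom P xi q.
Proof. by apply: integral_ge0 => x _; rewrite lee_fin powR_ge0. Qed.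

Lemma prod_powR (J : seq nat) (e : nat -> R) : uniq J ->
  (forall j, mom P xi (e j) < +oo) ->
  \int[P]_x (\prod_(j <- J) (xi j x) `^ (e j))%:E = \prod_(j <- J) mom P xi (e j).
Proof.
move=> uJ fin.
have := @L1 _ _ _ P xi hiid J (fun j y => (y `^ (e j))%R) uJ.
apply; split => j.
- exact: measurable_powR.
- move=> y; exact: powR_ge0.
- exact: fin.
Qed.

Lemma powR_prod (I : Type) (s : seq I) (F : I -> R) r : (forall j, 0 <= F j)%R ->
  ((\prod_(j <- s) F j) `^ r = \prod_(j <- s) F j `^ r)%R.
Proof.
move=> F0; elim: s => [|a s IH]; first by rewrite !big_nil powR1.
by rewrite !big_cons powRM ?IH //; exact: prodr_ge0.
Qed.

Lemma EXp r k : mom P xi r < +oo ->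
  \int[P]_x ((Xp xi k x) `^ r)%:E = \prod_(j < k) mom P xi r.
Proof.
move=> fin.
transitivity (\int[P]_x (\prod_(j <- index_iota 0 k) (xi j x) `^ r)%:E).
  apply: eq_integral => x _; congr EFin.
  rewrite /Xp big_mkord powR_prod // => j; exact: ltW.
rewrite (prod_powR (e := fun=> r)) ?big_mkord //.
exact: iota_uniq.
Qed.

Lemma mom_nat k : mom P xi k%:R = \int[P]_x ((xi 0 x) ^+ k)%:E.
Proof. by apply: eq_integral => x _; rewrite powR_mulrn // ltW. Qed.

Lemma MonoG M (e : nat -> nat) : (forall j, mom P xi (e j)%:R < +oo) ->
  \int[P]_x (\prod_(j < M) xi j x ^+ e j)%:E = \prod_(j < M) mom P xi (e j)%:R.
Proof.
move=> fin.
transitivity (\int[P]_x (\prod_(j <- index_iota 0 M) (xi j x) `^ (e j)%:R)%:E).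
  apply: eq_integral => x _; congr EFin.
  rewrite big_mkord; apply: eq_bigr => j _.
  by rewrite powR_mulrn // ltW.
rewrite (prod_powR (e := fun j => (e j)%:R)) ?big_mkord //.
exact: iota_uniq.
Qed.

Lemma superadd2 (a b r : R) : (1 <= r)%R -> (0 <= a)%R -> (0 <= b)%R ->
  (a `^ r + b `^ r <= (a + b) `^ r)%R.
Proof.
move=> r1 a0 b0.
have r0 : (0 < r)%R by apply: lt_le_trans r1.
have c0 : (0 <= a + b)%R by rewrite addr_ge0.
have r10 : (0 <= r - 1)%R by rewrite subr_ge0.
rewrite -(mulr_powRB1 a0 r0) -(mulr_powRB1 b0 r0) -(mulr_powRB1 c0 r0) mulrDl.
apply: lerD; apply: ler_wpM2l => //; apply: ge0_ler_powR => //;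
  rewrite ?nnegrE //.
- by rewrite lerDl.
- by rewrite lerDr.
Qed.

Lemma superadd (N : nat) (F : nat -> R) r : (1 <= r)%R -> (forall k, 0 <= F k)%R ->
  (\sum_(k < N) F k `^ r <= (\sum_(k < N) F k) `^ r)%R.
Proof.
move=> r1 F0; elim: N => [|N IH].
  by rewrite !big_ord0 powR0 // gt_eqF // (lt_le_trans ltr01 r1).
rewrite !big_ord_recr /=.
apply: le_trans (superadd2 r1 _ _) => //; last by apply: sumr_ge0.
by rewrite lerD2r.
Qed.

End moments.
Section parts.
Context (R : realType) (d : measure_display) (T : measurableType d)
  (P : probability T R) (xi : nat -> T -> R) (hiid : iid_seq P xi)
  (hpos : forall j x, (0 < xi j x)%R).
Local Open Scope ereal_scope.

Lemma mxij j : measurable_fun setT (xi j).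
Proof. exact: (hiid.1 j). Qed.

Lemma mXpr k r : measurable_fun setT (fun x => ((Xp xi k x) `^ r)%:E).
Proof.
by apply/measurable_EFinP; exact: (measurableT_comp (measurable_powR r) (mXp hiid k)).
Qed.

Lemma EYp_ge0 p : 0 <= EYp P xi p.
Proof. by apply: integral_ge0 => x _; exact: poweR_ge0. Qed.

Lemma part_a p : (1 <= p)%R -> EYp P xi p < +oo -> mom P xi p < 1.
Proof.
move=> p1 fin; rewrite ltNge; apply/negP => m1.
have p0 : (0 < p)%R by apply: lt_le_trans p1.
have key N : \sum_(k < N) \int[P]_x ((Xp xi k x) `^ p)%:E <= EYp P xi p.
  apply: le_trans (EY_ge hiid hpos N p0).
  rewrite -ge0_integral_sum //; last 2 first.
  - by move=> k; exact: mXpr.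
  - by move=> k x _; rewrite lee_fin powR_ge0.
  apply: ge0_le_integral => //.
  - by move=> x _; apply: sume_ge0 => k _; rewrite lee_fin powR_ge0.
  - by apply: emeasurable_sum => k; exact: mXpr.
  - apply/measurable_EFinP; exact: (measurableT_comp (measurable_powR p) (mSp hiid N)).
  - move=> x _; rewrite sumEFin lee_fin /Sp; apply: (@superadd _ N (fun k => Xp xi k x) p) => // k.
    exact: ltW (Xp_gt0 hpos _ _).
have [mfin|minf] := ltP (mom P xi p) +oo; last first.
  have := key 2%N; rewrite big_ord_recr /= big_ord1.
  have -> : \int[P]_x ((Xp xi 1 x) `^ p)%:E = mom P xi p.
    by apply: eq_integral => x _; rewrite /Xp big_ord1.
  move: minf; rewrite leye_eq => /eqP ->.
  rewrite addey; last first.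
    rewrite -ltNye; apply: lt_le_trans (integral_ge0 _ _) => //.
    by move=> x _; rewrite lee_fin powR_ge0.
  by rewrite leye_eq => /eqP E; rewrite E in fin.
set m := fine (mom P xi p).
have mE : mom P xi p = m%:E by rewrite /m fineK // ge0_fin_numE // mom_ge0.
have m1' : (1 <= m)%R by rewrite -lee_fin -mE.
move: fin; have := EYp_ge0 p; case: (EYp P xi p) key => // y key y0 _.
have [N hN] : exists N : nat, (y < N%:R)%R by exists (Num.truncn y).+1; exact: truncnS_gt.
have := key N.
have -> : \sum_(k < N) \int[P]_x ((Xp xi k x) `^ p)%:E = (\sum_(k < N) m ^+ k)%:E.
  rewrite -sumEFin; apply: eq_bigr => k _; rewrite (EXp hiid hpos) ?mE ?ltry //.
  by rewrite prodEFin prodr_const card_ord.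
rewrite lee_fin => H.
have : (N%:R <= \sum_(k < N) m ^+ k)%R.
  have -> : (N%:R = \sum_(k < N) (1:R))%R by rewrite sumr_const card_ord.
  apply: ler_sum => k _.
  exact: exprn_ege1.
move=> H2; have := lt_le_trans hN (le_trans H2 H).
by rewrite ltxx.
Qed.


Lemma part_b1 p q : (1 <= p)%R -> mom P xi p < 1 -> (0 < q)%R -> (q <= p)%R ->
  mom P xi q < 1.
Proof.
move=> p1 mp q0 qp.
have p0 : (0 < p)%R by apply: lt_le_trans p1.
have [->//|qnp] := eqVneq q p.
have qltp : (q < p)%R by rewrite lt_neqAle qnp qp.
set t := (q / p)%R.
have t0 : (0 < t)%R by rewrite divr_gt0.
have t1 : (t < 1)%R by rewrite ltr_pdivrMr // mul1r.
set m := fine (mom P xi p).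
have mE : mom P xi p = m%:E.
  by rewrite /m fineK // ge0_fin_numE ?mom_ge0 // (lt_trans mp) ?ltry.
have pw x : ((xi 0 x) `^ q <= (1 - t) + t * (xi 0 x) `^ p)%R.
  set ya := ((xi 0 x) `^ p)%R.
  have ya0 : (0 <= ya)%R by exact: powR_ge0.
  have a0 : (0 <= ya `^ t)%R by exact: powR_ge0.
  have t'0 : (0 < (1 - t)^-1)%R by rewrite invr_gt0 subr_gt0.
  have ti0 : (0 < t^-1)%R by rewrite invr_gt0.
  have := @conjugate_powR _ (ya `^ t)%R 1%R t^-1%R (1 - t)^-1%R a0 ler01 ti0 t'0.
  rewrite !invrK => /(_ (subrKC t 1)).
  rewrite mulr1 -powRrM mulfV ?(lt0r_neq0 t0) // powRr1 // powR1 /= mul1r.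
  have -> : (ya `^ t = (xi 0 x) `^ q)%R.
    by rewrite /ya -powRrM /t mulrCA mulfV ?(lt0r_neq0 p0) // mulr1.
  move=> H; apply: le_trans H _; lra.
have mq : measurable_fun setT (fun x => ((xi 0 x) `^ q)%:E).
  by apply/measurable_EFinP; exact: (measurableT_comp (measurable_powR q) (mxij 0)).
have mp' : measurable_fun setT (fun x => ((xi 0 x) `^ p)%:E).
  by apply/measurable_EFinP; exact: (measurableT_comp (measurable_powR p) (mxij 0)).
have H1 : mom P xi q <= \int[P]_x ((1 - t)%:E + t%:E * ((xi 0 x) `^ p)%:E).
  apply: ge0_le_integral => //.
  - by move=> x _; rewrite lee_fin powR_ge0.
  - apply: emeasurable_funD; first exact: measurable_cst.
    exact: measurable_funeM.
  - by move=> x _; rewrite -EFinM -EFinD lee_fin pw.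
have E1 : \int[P]_x ((1 - t)%:E + t%:E * ((xi 0 x) `^ p)%:E) =
    \int[P]_x ((1 - t)%:E) + \int[P]_x (t%:E * ((xi 0 x) `^ p)%:E).
  apply: ge0_integralD => //; first [by move=> x _; rewrite lee_fin subr_ge0 ltW
    | by move=> x _; rewrite -EFinM lee_fin mulr_ge0 ?powR_ge0 // ltW
    | exact: measurable_funeM | exact: measurable_cst].
have E2 : \int[P]_x (t%:E * ((xi 0 x) `^ p)%:E) = t%:E * mom P xi p.
  apply: ge0_integralZl_EFin => //; first [by move=> x _; rewrite lee_fin powR_ge0
    | exact: ltW].
rewrite E1 E2 in H1.
rewrite integral_cst // in H1.
set c := (X in _%:E * X + _) in H1.
have c1 : c = 1 by rewrite /c; exact: probability_setT.
rewrite c1 mule1 in H1.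
apply: le_lt_trans H1 _.
rewrite mE -EFinM -EFinD lte_fin.
have : (m < 1)%R by rewrite -lte_fin -mE.
move=> m1; nra.
Qed.

Lemma geom (a : R) N : (0 <= a)%R -> (a < 1)%R ->
  (\sum_(k < N) a ^+ k <= (1 - a)^-1)%R.
Proof.
move=> a0 a1.
have E : ((1 - a) * \sum_(k < N) a ^+ k = 1 - a ^+ N)%R.
  elim: N => [|N IH]; first by rewrite big_ord0 mulr0 expr0 subrr.
  rewrite big_ord_recr /= mulrDr IH exprSr; ring.
have h : (0 < 1 - a)%R by rewrite subr_gt0.
rewrite -[leLHS](mulKf (lt0r_neq0 h)) E -[X in (_ <= X)%R]mulr1 ler_wpM2l ?invr_ge0 ?(ltW h) //.
have := exprn_ge0 N a0; lra.
Qed.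


Lemma LnormE (f : T -> R) r :
  Lnorm P r%:E (EFin \o f) = (\int[P]_x (`|f x| `^ r)%:E) `^ r^-1.
Proof. by rewrite unlock. Qed.

Lemma NXp r k : mom P xi r < +oo ->
  Lnorm P r%:E (EFin \o Xp xi k) = (((fine (mom P xi r)) `^ r^-1) ^+ k)%:E.
Proof.
move=> fin; rewrite LnormE.
rewrite (_ : \int[P]_x (`|Xp xi k x| `^ r)%:E = \int[P]_x ((Xp xi k x) `^ r)%:E); last first.
  by apply: eq_integral => x _; rewrite ger0_norm // ltW // Xp_gt0.
rewrite (EXp hiid hpos) //.
have mE : mom P xi r = (fine (mom P xi r))%:E.
  by rewrite fineK // ge0_fin_numE ?mom_ge0.
rewrite [in LHS]mE prodEFin prodr_const card_ord poweR_EFin.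
have m0 : (0 <= fine (mom P xi r))%R by rewrite fine_ge0 // mom_ge0.
by rewrite -[in LHS](powR_mulrn _ m0) powRAC powR_mulrn // powR_ge0.
Qed.

Lemma NSp r N : (1 <= r)%R -> mom P xi r < +oo ->
  Lnorm P r%:E (EFin \o Sp xi N) <=
  (\sum_(k < N) ((fine (mom P xi r)) `^ r^-1) ^+ k)%:E.
Proof.
move=> r1 fin; elim: N => [|N IH].
  rewrite big_ord0 (@eq_Lnorm _ _ _ P r%:E _ (cst 0)); last first.
    by move=> x; rewrite /= /Sp big_ord0.
  by rewrite Lnorm0 // eqe; apply: lt0r_neq0; apply: lt_le_trans r1.
rewrite (@eq_Lnorm _ _ _ P r%:E _ (EFin \o (Sp xi N \+ Xp xi N)%R)); last first.
  by move=> x; rewrite /= Sp_S.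
apply: le_trans (minkowski_EFin P (mSp hiid N) (mXp hiid N) r1) _.
rewrite big_ord_recr /= EFinD NXp //.
by rewrite leeD2r.
Qed.

Lemma EY_sup r : (0 < r)%R ->
  EYp P xi r = ereal_sup (range (fun N => \int[P]_x ((Sp xi N x) `^ r)%:E)).
Proof.
move=> r0.
have nd : {homo (fun N => \int[P]_x ((Sp xi N x) `^ r)%:E) : m n / (m <= n)%N >-> m <= n}.
  move=> m n mn; apply: ge0_le_integral => //.
  - by move=> x _; rewrite lee_fin powR_ge0.
  - apply/measurable_EFinP; exact: (measurableT_comp (measurable_powR r) (mSp hiid _)).
  - apply/measurable_EFinP; exact: (measurableT_comp (measurable_powR r) (mSp hiid _)).
  - move=> x _; rewrite lee_fin ge0_ler_powR ?nnegrE ?(Sp_ge0 hpos) ?(ltW r0) //.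
    exact: Sp_nd.
have E := cvg_unique (@ereal_hausdorff R) (cvg_EY hiid hpos r0) (ereal_nondecreasing_cvgn nd).
exact: E.
Qed.

Lemma part_b2 p : (1 <= p)%R -> mom P xi p < 1 ->
  EYp P xi p <= ((1 - fine (mom P xi p) `^ p^-1) `^ (- p))%:E.
Proof.
move=> p1 mp.
have p0 : (0 < p)%R by apply: lt_le_trans p1.
have fin : mom P xi p < +oo by apply: lt_trans mp _; rewrite ltry.
set m := fine (mom P xi p).
have mE : mom P xi p = m%:E by rewrite /m fineK // ge0_fin_numE ?mom_ge0.
have m0 : (0 <= m)%R by rewrite -lee_fin -mE mom_ge0.
have m1 : (m < 1)%R by rewrite -lte_fin -mE.
set a := (m `^ p^-1)%R.
have a0 : (0 <= a)%R by exact: powR_ge0.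
have a1 : (a < 1)%R.
  have pi0 : (0 < p^-1)%R by rewrite invr_gt0.
  have mn : (m \in Num.nneg)%R by rewrite nnegrE.
  have onen : ((1:R) \in Num.nneg)%R by rewrite nnegrE.
  by move: (gt0_ltr_powR pi0 mn onen m1); rewrite powR1.
have a1' : (0 < 1 - a)%R by rewrite subr_gt0.
rewrite (EY_sup p0); apply: ge_ereal_sup => _ [N _ <-].
have -> : \int[P]_x ((Sp xi N x) `^ p)%:E = Lnorm P p%:E (EFin \o Sp xi N) `^ p.
  rewrite poweR_Lnorm ?(lt0r_neq0 p0) //.
  apply: eq_integral => x _.
  change ((EFin \o Sp xi N) x) with ((Sp xi N x)%:E).
  by rewrite abse_EFin poweR_EFin ger0_norm ?(Sp_ge0 hpos).
apply: le_trans (poweR_le (ltW p0) (Lnorm_ge0 P _ _) (NSp N p1 fin)) _.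
rewrite poweR_EFin lee_fin.
have -> : ((1 - a) `^ (- p) = ((1 - a)^-1) `^ p)%R.
  have -> : (- p = -1 * p)%R by rewrite mulN1r.
  by rewrite powRrM powR_inv1 // ltW.
apply: ge0_ler_powR; rewrite ?nnegrE ?(ltW p0) //.
- by apply: sumr_ge0 => k _; exact: exprn_ge0.
- by rewrite invr_ge0 ltW.
- exact: geom.
Qed.

End parts.
Definition cF k N (F : {ffun 'I_k -> 'I_N}) (j : nat) : nat :=
  #|[pred t : 'I_k | (j < F t)%N]|.

Definition eF k N (F : {ffun 'I_k -> 'I_N}) (m : nat) : nat :=
  if m is m'.+1 then cF F m' else k.

Lemma cF_le k N (F : {ffun 'I_k -> 'I_N}) j : (cF F j <= k)%N.
Proof. by rewrite /cF -[X in (_ <= X)%N]card_ord max_card. Qed.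

Lemma pc (R : comRingType) (x : R) k : (\prod_(t < k) x = x ^+ k)%R.
Proof. by rewrite prodr_const card_ord. Qed.

Lemma expand (R : comRingType) (g : nat -> R) N k :
  ((\sum_(i < N) \prod_(j < i) g j) ^+ k =
  \sum_(F : {ffun 'I_k -> 'I_N}) \prod_(j < N) g j ^+ cF F j)%R.
Proof.
rewrite -pc bigA_distr_bigA; apply: eq_bigr => F _.
under eq_bigr => t _ do rewrite (big_ord_widen N _ (ltnW (ltn_ord (F t)))) big_mkcond.
rewrite exchange_big; apply: eq_bigr => j _.
rewrite -big_mkcond /cF -prodr_const.
by apply: eq_bigl => t.
Qed.

Definition Sh1 {R : realType} {T : Type} (xi : nat -> T -> R) (N : nat) (x : T) : R :=
  (\sum_(i < N) \prod_(j < i) xi j.+1 x)%R.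

Lemma Sp_rec {R : realType} {T : Type} (xi : nat -> T -> R) N x :
  Sp xi N.+1 x = (1 + xi 0 x * Sh1 xi N x)%R.
Proof.
rewrite /Sp big_ord_recl /Xp big_ord0 mulr_sumr; congr (_ + _)%R.
by apply: eq_bigr => i _; rewrite big_ord_recl.
Qed.

Section partc.
Context (R : realType) (d : measure_display) (T : measurableType d)
  (P : probability T R) (xi : nat -> T -> R) (hiid : iid_seq P xi)
  (hpos : forall j x, (0 < xi j x)%R).
Local Open Scope ereal_scope.

Variable n : nat.
Hypothesis finm : forall k, (k <= n)%N -> mom P xi k%:R < +oo.

Definition Phi N k := \sum_(F : {ffun 'I_k -> 'I_N}) \prod_(j < N) mom P xi (cF F j)%:R.

Lemma mxi' j : measurable_fun setT (xi j).
Proof. exact: (hiid.1 j). Qed.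

Lemma ES N k : (k <= n)%N -> \int[P]_x ((Sp xi N x) ^+ k)%:E = Phi N k.
Proof.
move=> kn.
transitivity (\int[P]_x (\sum_(F : {ffun 'I_k -> 'I_N})
                (\prod_(j < N) xi j x ^+ cF F j)%:E)).
  by apply: eq_integral => x _; rewrite sumEFin /Sp /Xp (expand (fun j => xi j x)).
rewrite ge0_integral_sum //; last 2 first.
- move=> F; apply/measurable_EFinP; apply: measurable_prod => j _.
  exact: (measurable_funX _ (mxi' j)).
- move=> F x _; rewrite lee_fin; apply: prodr_ge0 => j _.
  by apply: exprn_ge0; exact: ltW.
apply: eq_bigr => F _; apply: (MonoG hiid hpos) => j.
apply: finm; exact: leq_trans (cF_le F j) kn.
Qed.

Lemma EX0S N k : (k <= n)%N ->
  \int[P]_x ((xi 0 x) ^+ k * (Sh1 xi N x) ^+ k)%:E = mom P xi k%:R * Phi N k.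
Proof.
move=> kn.
transitivity (\int[P]_x (\sum_(F : {ffun 'I_k -> 'I_N})
                (\prod_(j < N.+1) xi j x ^+ eF F j)%:E)).
  apply: eq_integral => x _; rewrite sumEFin /Sh1 (expand (fun j => xi j.+1 x)) mulr_sumr.
  by congr EFin; apply: eq_bigr => F _; rewrite big_ord_recl.
rewrite ge0_integral_sum //; last 2 first.
- move=> F; apply/measurable_EFinP; apply: measurable_prod => j _.
  exact: (measurable_funX _ (mxi' j)).
- move=> F x _; rewrite lee_fin; apply: prodr_ge0 => j _.
  by apply: exprn_ge0; exact: ltW.
rewrite /Phi ge0_sume_distrr; last first.
  by move=> F _; apply: prode_ge0 => j _; exact: mom_ge0.
apply: eq_bigr => F _; rewrite (MonoG hiid hpos).
  by rewrite big_ord_recl.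
case=> [|j]; apply: finm => //.
exact: leq_trans (cF_le F j) kn.
Qed.


Lemma mSh1 N : measurable_fun setT (Sh1 xi N).
Proof.
apply: measurable_sum => i; apply: measurable_prod => j _; exact: mxi'.
Qed.

Lemma Sh1_ge0 N x : (0 <= Sh1 xi N x)%R.
Proof. by apply: sumr_ge0 => i _; apply: prodr_ge0 => j _; exact: ltW. Qed.

Lemma XS_ge0 N k x : (0 <= (xi 0 x) ^+ k * (Sh1 xi N x) ^+ k)%R.
Proof. by apply: mulr_ge0; apply: exprn_ge0; [exact: ltW | exact: Sh1_ge0]. Qed.

Lemma recN N : \int[P]_x ((Sp xi N.+1 x) ^+ n)%:E =
  \sum_(k < n.+1) ('C(n, k)%:R)%:E * (mom P xi k%:R * Phi N k).
Proof.
transitivity (\int[P]_x (\sum_(k < n.+1)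
   ('C(n, k)%:R)%:E * ((xi 0 x) ^+ k * (Sh1 xi N x) ^+ k)%:E)).
  apply: eq_integral => x _.
  rewrite Sp_rec addrC exprD1n -sumEFin; apply: eq_bigr => k _.
  by rewrite -EFinM mulr_natl exprMn.
rewrite ge0_integral_sum //; last 2 first.
- move=> k; apply: measurable_funeM; apply/measurable_EFinP.
  apply: measurable_funM; apply: measurable_funX; [exact: mxi'|exact: mSh1].
- by move=> k x _; apply: mule_ge0; rewrite lee_fin // XS_ge0.
apply: eq_bigr => k _; rewrite ge0_integralZl_EFin //.
- by rewrite EX0S // -ltnS.
- by move=> x _; rewrite lee_fin XS_ge0.
- apply/measurable_EFinP.
  apply: measurable_funM; apply: measurable_funX; [exact: mxi'|exact: mSh1].
Qed.

End partc.
Lemma cvge_sum_ge0 (R : realType) (I : Type) (s : seq I) (u : I -> nat -> \bar R)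
    (l : I -> \bar R) :
  (forall i N, (0 <= u i N)%E) -> (forall i, (0 <= l i)%E) ->
  (forall i, u i N @[N --> \oo] --> l i) ->
  (\sum_(i <- s) u i N)%E @[N --> \oo] --> (\sum_(i <- s) l i)%E.
Proof.
move=> u0 l0 ul; elim: s => [|a s IH].
  rewrite big_nil; under eq_fun do rewrite big_nil; exact: cvg_cst.
rewrite big_cons; under eq_fun do rewrite big_cons.
apply: cvgeD => //; apply: ge0_adde_def; rewrite inE //.
by apply: sume_ge0 => i _.
Qed.

Section final.
Context (R : realType) (d : measure_display) (T : measurableType d)
  (P : probability T R) (xi : nat -> T -> R) (hiid : iid_seq P xi)
  (hpos : forall j x, (0 < xi j x)%R).
Local Open Scope ereal_scope.

Lemma int1 : \int[P]_x (1%:E : \bar R) = 1.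
Proof.
rewrite integral_cst // mul1e.
exact: probability_setT.
Qed.

Lemma mom0 : mom P xi 0%:R = 1.
Proof.
rewrite /mom; under eq_integral => x _ do rewrite mulr0n powRr0.
exact: int1.
Qed.

Lemma EYp0 : EYp P xi 0%:R = 1.
Proof.
rewrite /EYp; under eq_integral => x _ do rewrite mulr0n poweRe0.
exact: int1.
Qed.

Lemma cvgS k : (fun N => \int[P]_x ((Sp xi N x) ^+ k)%:E) @ \oo --> EYp P xi k%:R.
Proof.
case: k => [|k].
  rewrite EYp0 (_ : (fun N => _) = fun=> 1); first exact: cvg_cst.
  apply: funext => N; under eq_integral => x _ do rewrite expr0.
  exact: int1.
have -> : (fun N => \int[P]_x ((Sp xi N x) ^+ k.+1)%:E) =
          (fun N => \int[P]_x ((Sp xi N x) `^ k.+1%:R)%:E).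
  apply: funext => N; apply: eq_integral => x _.
  by rewrite powR_mulrn // (Sp_ge0 hpos).
by apply: (cvg_EY hiid hpos); rewrite ltr0n.
Qed.

Lemma part_c n : (0 < n)%N -> mom P xi n%:R < 1 ->
  EYp P xi n%:R =
  ((1 - fine (mom P xi n%:R))^-1)%:E *
  \sum_(k < n) ('C(n, k)%:R)%:E * mom P xi k%:R * EYp P xi k%:R.
Proof.
move=> n0 mn.
have n1 : (1 <= n%:R :> R)%R by rewrite ler1n.
have momk k : (0 < k)%N -> (k <= n)%N -> mom P xi k%:R < 1.
  move=> k0 kn; apply: (part_b1 hiid n1 mn); by rewrite ?ltr0n ?ler_nat.
have finm k : (k <= n)%N -> mom P xi k%:R < +oo.
  case: k => [|k] kn; first by rewrite mom0 ltry.
  by apply: lt_trans (momk _ _ kn) _; rewrite ?ltry.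
have momfin k : (k <= n)%N -> mom P xi k%:R \is a fin_num.
  by move=> kn; rewrite ge0_fin_numE ?finm // (mom_ge0 P xi).
have finE k : (k <= n)%N -> EYp P xi k%:R \is a fin_num.
  case: k => [|k] kn; first by rewrite EYp0.
  rewrite ge0_fin_numE ?(EYp_ge0 P xi) //.
  apply: le_lt_trans (part_b2 hiid hpos _ (momk _ _ kn)) _; rewrite ?ltry //.
  by rewrite ler1n.
have L k : (k <= n)%N -> (fun N => Phi P xi N k) @ \oo --> EYp P xi k%:R.
  move=> kn; rewrite (_ : (fun N => _) = fun N => \int[P]_x ((Sp xi N x) ^+ k)%:E).
    exact: cvgS.
  by apply: funext => N; rewrite (ES hiid hpos finm).
have HL : (fun N => Phi P xi N.+1 n) @ \oo --> EYp P xi n%:R.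
  by have := L n (leqnn n); rewrite -(cvg_shiftS (fun N => Phi P xi N n)).
have HL' : (fun N => \sum_(k < n.+1) ('C(n, k)%:R)%:E * (mom P xi k%:R * Phi P xi N k))
           @ \oo --> EYp P xi n%:R.
  rewrite (_ : (fun N => _) = fun N => Phi P xi N.+1 n) //.
  apply: funext => N; rewrite -(recN hiid hpos finm) (ES hiid hpos finm) //.
have Phi0 N k : 0 <= Phi P xi N k.
  by apply: sume_ge0 => F _; apply: prode_ge0 => j _; exact: (mom_ge0 P xi).
have HR : (fun N => \sum_(k < n.+1) ('C(n, k)%:R)%:E * (mom P xi k%:R * Phi P xi N k))
           @ \oo --> \sum_(k < n.+1) ('C(n, k)%:R)%:E * (mom P xi k%:R * EYp P xi k%:R).
  apply: cvge_sum_ge0.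
  - by move=> k N; apply: mule_ge0; [rewrite lee_fin | apply: mule_ge0; rewrite ?(mom_ge0 P xi)].
  - by move=> k; apply: mule_ge0; [rewrite lee_fin | apply: mule_ge0; rewrite ?(mom_ge0 P xi) ?(EYp_ge0 P xi)].
  - move=> k; apply: cvgeZl => //; apply: cvgeZl; first by apply: momfin; rewrite -ltnS.
    by apply: L; rewrite -ltnS.
have E : EYp P xi n%:R =
    \sum_(k < n.+1) ('C(n, k)%:R)%:E * (mom P xi k%:R * EYp P xi k%:R).
  exact: (cvg_unique _ HL' HR).
rewrite big_ord_recr /= binn in E.
set S := \sum_(k < n) ('C(n, k)%:R)%:E * mom P xi k%:R * EYp P xi k%:R.
have SE : \sum_(k < n) ('C(n, k)%:R)%:E * (mom P xi k%:R * EYp P xi k%:R) = S.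
  by apply: eq_bigr => k _; rewrite muleA.
rewrite SE in E.
have Sfin : S \is a fin_num.
  apply: (big_ind (fun x => x \is a fin_num)) => //; first by move=> x y hx hy; rewrite fin_numD hx hy.
  move=> k _; apply: fin_numM; first apply: fin_numM => //.
  - by apply: momfin; exact: ltnW.
  - by apply: finE; exact: ltnW.
have mf := momfin n (leqnn n).
have ef := finE n (leqnn n).
rewrite -(fineK Sfin) -(fineK ef) -(fineK mf) in E.
rewrite -(fineK Sfin) -(fineK ef) -EFinM; congr EFin.
move: E; set s := fine S; set e := fine (EYp P xi n%:R); set m := fine (mom P xi n%:R).
have m1 : (m < 1)%R.
  by rewrite -lte_fin /m fineK.
rewrite -!EFinM -EFinD => /eqP; rewrite eqe => /eqP E.
have hm : (1 - m != 0)%R by rewrite subr_eq0 eq_sym lt_eqF.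
have se : s = ((1 - m) * e)%R.
  by rewrite mulrBl mul1r {1}E; ring.
by rewrite se mulKf.
Qed.

End final.

Theorem theorem2 (R : realType) (d : measure_display) (T : measurableType d)
  (P : probability T R) (xi : nat -> T -> R)
  (hiid : iid_seq P xi) (hpos : forall j x, 0 < xi j x)
  (p : R) (hp : 1 <= p) :
  ((EYp P xi p < +oo)%E <-> (mom P xi p < 1)%E) /\
  ((mom P xi p < 1)%E ->
     (forall q : R, 1 <= q <= p -> (mom P xi q < 1)%E) /\
     (EYp P xi p <= ((1 - fine (mom P xi p) `^ p^-1) `^ (- p))%:E)%E) /\
  (forall n : nat, p = n%:R -> (mom P xi p < 1)%E ->
     EYp P xi p =
       (((1 - fine (mom P xi p))^-1)%:E *
        \sum_(k < n) ('C(n, k)%:R)%:E * mom P xi k%:R * EYp P xi k%:R)%E).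
Proof.
split; [split|split].
- exact: (part_a hiid hpos hp).
- move=> mp; apply: le_lt_trans (part_b2 hiid hpos hp mp) _; exact: ltry.
- move=> mp; split.
  + move=> q /andP[q1 qp]; apply: (part_b1 hiid hp mp) => //.
    exact: lt_le_trans q1.
  + exact: part_b2.
- move=> n pn mp; subst p; apply: part_c => //.
  by rewrite -(ltr_nat R) (lt_le_trans ltr01 hp).
Qed.
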